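(* Let $(A_i,\omega_i)$, $i=1,2$, be baric algebras over $K$. Then $A_1\bowtie A_2$ is associative if and only if $xy=(\omega_1\bowtie\omega_2)(y)\,x$ for all $x,y\in A_1\bowtie A_2$.
   Context: A baric algebra over a field $K$ is a pair $(A,\omega)$ where $A$ is a (not necessarily associative) $K$-algebra and $\omega:A\to K$ is a nonzero $K$-algebra homomorphism. For baric algebras $(A_1,\omega_1),(A_2,\omega_2)$, $A_1\bowtie A_2$ denotes the vector space $A_1\oplus A_2$ with product $(a_1,a_2)(b_1,b_2)=(a_1b_1+\omega_2(b_2)a_1,\ a_2b_2+\omega_1(b_1)a_2)$, and $\omega_1\bowtie\omega_2(a_1,a_2)=\omega_1(a_1)+\omega_2(a_2)$. *)

(* Defs.v *)
From HB Require Import structures.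
From mathcomp Require Import all_boot all_order all_algebra.
Set Implicit Arguments. Unset Strict Implicit. Unset Printing Implicit Defensive.
Import GRing.Theory.
Local Open Scope ring_scope.

Definition is_algebra_mul (K : fieldType) (A : lmodType K) (mul : A -> A -> A) : Prop :=
  (forall (a : K) (x y z : A), mul (a *: x + y) z = a *: mul x z + mul y z) /\
  (forall (a : K) (x y z : A), mul x (a *: y + z) = a *: mul x y + mul x z).

Definition is_baric (K : fieldType) (A : lmodType K) (mul : A -> A -> A) (w : A -> K) : Prop :=
  [/\ is_algebra_mul mul,
      (forall (a : K) (x y : A), w (a *: x + y) = a * w x + w y),
      (forall x y : A, w (mul x y) = w x * w y) &
      (exists x : A, w x != 0)].

Definition associative_mul (T : Type) (mul : T -> T -> T) : Prop :=
  forall x y z : T, mul x (mul y z) = mul (mul x y) z.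

Definition bowtie_mul (K : fieldType) (A1 A2 : lmodType K)
  (mul1 : A1 -> A1 -> A1) (w1 : A1 -> K)
  (mul2 : A2 -> A2 -> A2) (w2 : A2 -> K) (x y : A1 * A2) : A1 * A2 :=
  (mul1 x.1 y.1 + w2 y.2 *: x.1, mul2 x.2 y.2 + w1 y.1 *: x.2).

Definition bowtie_w (K : fieldType) (A1 A2 : lmodType K)
  (w1 : A1 -> K) (w2 : A2 -> K) (x : A1 * A2) : K :=
  w1 x.1 + w2 x.2.

(* Main.v *)
Require Import Defs.
From HB Require Import structures.
From mathcomp Require Import all_boot all_order all_algebra.
Import GRing.Theory.
Local Open Scope ring_scope.

Lemma dbl0 (V : zmodType) (m : V) : m = m + m -> m = 0.
Proof. by move=> E; apply: (@addrI _ m); rewrite addr0 -E. Qed.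

Section Aux.
Context {K : fieldType} {A : lmodType K} {mul : A -> A -> A} {w : A -> K}.
Hypothesis h : is_baric mul w.

Lemma w0 : w 0 = 0.
Proof.
case: h => _ hl _ _; have := hl 1 0 0; rewrite scale1r addr0 mul1r.
exact: dbl0.
Qed.

Lemma wZ a x : w (a *: x) = a * w x.
Proof. case: h => _ hl _ _; by rewrite -[a *: x]addr0 hl w0 addr0. Qed.

Lemma mul0x x : mul 0 x = 0.
Proof.
case: h => [[hl _] _ _ _]; have := hl 1 0 0 x; rewrite scale1r addr0 scale1r.
exact: dbl0.
Qed.

Lemma mulx0 x : mul x 0 = 0.
Proof.
case: h => [[_ hr] _ _ _]; have := hr 1 x 0 0; rewrite scale1r addr0 scale1r.
exact: dbl0.
Qed.

Lemma wmul x y : w (mul x y) = w x * w y.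
Proof. by case: h. Qed.

Lemma unit_elt : exists e, w e = 1.
Proof.
case: h => _ _ _ [x hx]; exists ((w x)^-1 *: x); by rewrite wZ mulVf.
Qed.
End Aux.

Theorem proposition6p1 (K : fieldType) (A1 A2 : lmodType K)
  (mul1 : A1 -> A1 -> A1) (w1 : A1 -> K)
  (mul2 : A2 -> A2 -> A2) (w2 : A2 -> K)
  (h1 : is_baric mul1 w1) (h2 : is_baric mul2 w2) :
  associative_mul (bowtie_mul mul1 w1 mul2 w2) <->
  (forall x y : A1 * A2,
     bowtie_mul mul1 w1 mul2 w2 x y = bowtie_w w1 w2 y *: x).
Proof.
split.
- move=> H [a1 a2] [b1 b2].
  have [e1 he1] := unit_elt h1; have [e2 he2] := unit_elt h2.
  have E1 : mul1 a1 b1 = w1 b1 *: a1.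
    have := congr1 fst (H (a1, 0) (0, e2) (b1, 0)).
    rewrite /bowtie_mul /= !(mul0x h1, mulx0 h1, mul0x h2, mulx0 h2, w0 h1, w0 h2).
    rewrite !(scaler0, add0r, addr0) (wZ h2) he2 mulr1 scale1r.
    by rewrite (mulx0 h1) scale0r addr0 add0r => ->.
  have E2 : mul2 a2 b2 = w2 b2 *: a2.
    have := congr1 snd (H (0, a2) (e1, 0) (0, b2)).
    rewrite /bowtie_mul /= !(mul0x h1, mulx0 h1, mul0x h2, mulx0 h2, w0 h1, w0 h2).
    rewrite !(scaler0, add0r, addr0) (wZ h1) he1 mulr1 scale1r.
    by rewrite (mulx0 h2) scale0r addr0 add0r => ->.
  by rewrite /bowtie_mul /bowtie_w /= E1 E2 -!scalerDl [w2 b2 + _]addrC.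
- move=> H x y z; rewrite !H scalerA; congr (_ *: _).
  rewrite /bowtie_w /= (wZ h1) (wZ h2) -mulrDr.
  by rewrite mulrC.
Qed.
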